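(* Let $\mu$ be a positive Borel measure on $\mathbb{R}$, absolutely continuous w.r.t. Lebesgue measure, with finite moments, supported on a set $E$ with infinitely many points, $c\in\mathbb{R}\setminus E$, $N>0$, and assume the monic orthogonal polynomials $P_n$ of $\mu$ satisfy $xP_n=P_{n+1}+\beta_nP_n+\gamma_nP_{n-1}$ and $\sigma(x)P_n'(x)=a(x;n)P_n(x)+b(x;n)P_{n-1}(x)$ with polynomials $\sigma,a(\cdot;n),b(\cdot;n)$. Then $$Q_{n-1}^{c,N}(x)=A_2(n)P_n(x)+B_2(x;n)P_{n-1}(x),\qquad [Q_{n-1}^{c,N}]'(x)=C_2(x;n)P_n(x)+D_2(x;n)P_{n-1}(x),$$ where $$A_2(n)=\frac{-\Lambda_{n-1}^c}{\gamma_{n-1}},\qquad B_2(x;n)=\Lambda_{n-1}^c\Big(\frac{1}{\Lambda_{n-1}^c}+\frac{x-\beta_{n-1}}{\gamma_{n-1}}\Big),$$ $$C_2(x;n)=-\frac{\Lambda_{n-1}^c}{\sigma(x)}\Big(\frac{a(x;n)}{\gamma_{n-1}}+\frac{b(x;n-1)}{\gamma_{n-1}}\Big(\frac{1}{\Lambda_{n-1}^c}+\frac{x-\beta_{n-1}}{\gamma_{n-1}}\Big)\Big),$$ $$D_2(x;n)=\frac{\Lambda_{n-1}^c}{\sigma(x)}\Big[\frac{\sigma(x)-b(x;n)}{\gamma_{n-1}}+b(x;n-1)\Big(\frac{a(x;n-1)}{b(x;n-1)}+\frac{x-\beta_{n-1}}{\gamma_{n-1}}\Big)\Big(\frac{1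}{\Lambda_{n-1}^c}+\frac{x-\beta_{n-1}}{\gamma_{n-1}}\Big)\Big].$$
   Context: $\{Q_n^c\}$ is the MOPS for $\int fg\frac{1}{x-c}d\mu$; $\{Q_n^{c,N}\}$ is the MOPS for $\int fg\frac{1}{x-c}d\mu+Nf(c)g(c)$. $\Lambda_m^c$ is the constant with $Q_m^{c,N}=P_m+\Lambda_m^cP_{m-1}$, namely $\Lambda_m^c=\frac{\pi_{m-1}-r_{m-1}}{1+NB_m^c}-\pi_{m-1}$ with $\pi_{m-1}=P_m(c)/P_{m-1}(c)$, $r_{m-1}=F_m(c)/F_{m-1}(c)$, $F_m(s)=\int\frac{P_m(x)}{x-s}d\mu(x)$, $F_{-1}=1$, $B_m^c=\frac{-Q_m^c(c)P_{m-1}(c)}{\int P_{m-1}^2d\mu}$. *)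

(* Defs.v *)
From HB Require Import structures.
From mathcomp Require Import all_boot all_order all_algebra.
From mathcomp Require Import all_classical all_reals all_analysis.
Set Implicit Arguments. Unset Strict Implicit. Unset Printing Implicit Defensive.
Import Order.TTheory GRing.Theory Num.Theory.
Import numFieldNormedType.Exports.
Local Open Scope classical_set_scope.
Local Open Scope ring_scope.

Definition msupport (R : realType)
  (mu : {measure set (measurableTypeR R) -> \bar R}) : set R :=
  [set x | forall e : R, 0 < e -> (0 < mu (ball x e))%E].

Definition Lmu (R : realType) (mu : {measure set (measurableTypeR R) -> \bar R})
  (f g : {poly R}) : R :=
  fine (\int[mu]_x ((f.[x] * g.[x])%:E)).

Definition LcN (R : realType) (mu : {measure set (measurableTypeR R) -> \bar R})
  (c N : R) (f g : {poly R}) : R :=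
  fine (\int[mu]_x ((f.[x] * g.[x] / (x - c))%:E)) + N * f.[c] * g.[c].

Definition is_MOPS (R : realType) (L : {poly R} -> {poly R} -> R)
  (P : nat -> {poly R}) : Prop :=
  forall n : nat,
    [/\ P n \is monic, size (P n) = n.+1,
        (forall m : nat, m <> n -> L (P n) (P m) = 0) & L (P n) (P n) <> 0].

Definition Pprev (R : ringType) (P : nat -> {poly R}) (n : nat) : {poly R} :=
  if n is k.+1 then P k else 0.

(* Lambda_m^c : the constant with Q_m^{c,N} = P_m + Lambda_m^c P_{m-1}.
   As P_{m-1} is monic of degree m-1, this constant is the coefficient of
   X^{m-1} in Q_m^{c,N} - P_m. *)
Definition Lambda (R : ringType) (Q P : nat -> {poly R}) (m : nat) : R :=
  (Q m - P m)`_(m.-1).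

(* Main.v *)
Require Import Defs.
From HB Require Import structures.
From mathcomp Require Import all_boot all_order all_algebra.
From mathcomp Require Import all_classical all_reals all_analysis.
From mathcomp Require Import measurable_realfun.
From mathcomp Require Import ring zify.
Import Order.TTheory GRing.Theory Num.Theory.
Import numFieldNormedType.Exports.
Local Open Scope classical_set_scope.
Local Open Scope ring_scope.


Section Alg.
Context (R : realType) (B : {poly R} -> {poly R} -> R).
Hypothesis Bsym : forall p q, B p q = B q p.
Hypothesis BD : forall p q r, B (p + q) r = B p r + B q r.
Hypothesis BZ : forall a p r, B (a *: p) r = a * B p r.
Variable P : nat -> {poly R}.
Hypothesis HP : is_MOPS B P.

Lemma B0l r : B 0 r = 0.
Proof. by rewrite -(scale0r 0) BZ mul0r. Qed.

Lemma coefPk k : (P k)`_k = 1.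
Proof.
have [/monicP m s _ _] := HP k.
by rewrite -m lead_coefE s.
Qed.

Lemma size_red k (p : {poly R}) : (size p <= k.+1)%N ->
  (size (p - p`_k *: P k)%R <= k)%N.
Proof.
move=> sp; apply/leq_sizeP => j kj.
have [_ s _ _] := HP k.
rewrite coefB coefZ; case: (ltngtP k j) kj => // [kj|<-] _.
  have -> : (P k)`_j = 0 by rewrite nth_default // s.
  by rewrite (nth_default 0 (leq_trans sp kj)) mulr0 subr0.
by rewrite coefPk mulr1 subrr.
Qed.

Lemma orth_low k (p : {poly R}) : (size p <= k)%N -> forall i, (k <= i)%N -> B (P i) p = 0.
Proof.
elim: k p => [|k IH] p sp i ki.
  by move/size_poly_leq0P: sp => ->; rewrite Bsym B0l.
have -> : p = (p - p`_k *: P k) + p`_k *: P k by rewrite subrK.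
rewrite Bsym BD BZ Bsym IH ?size_red //; last exact: ltnW.
have [_ _ o _] := HP k.
by rewrite o ?mulr0 ?addr0 //; move=> e; rewrite e ltnn in ki.
Qed.

Lemma zero_of_orth k (r : {poly R}) : (size r <= k)%N ->
  (forall i, (i < k)%N -> B r (P i) = 0) -> r = 0.
Proof.
elim: k r => [|k IH] r sr H.
  by apply/size_poly_leq0P.
have rk : r`_k = 0.
  have e : B r (P k) = r`_k * B (P k) (P k).
    rewrite {1}(_ : r = (r - r`_k *: P k) + r`_k *: P k); last by rewrite subrK.
    by rewrite BD BZ Bsym (orth_low _ _ (size_red _ _ sr) k (leqnn k)) add0r.
  have [_ _ _ nz] := HP k.
  move: (H k (ltnSn k)); rewrite e => /eqP.
  by rewrite mulf_eq0 (negbTE (introN eqP nz)) orbF => /eqP.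
apply: IH => [|i ik]; last exact: H (ltnW ik).
by move: (size_red _ _ sr); rewrite rk scale0r subr0.
Qed.
End Alg.


Lemma meas_inv (R : realType) : measurable_fun setT (@GRing.inv R).
Proof.
have -> : [set: R] = [set x : R | x != 0] `|` [set 0].
  apply/seteqP; split => x //= _; case: (eqVneq x 0) => [->|h]; [by right|by left].
apply/measurable_funU.
- by apply: open_measurable; exact: open_neq.
- exact: measurable_set1.
split; last exact: measurable_fun_set1.
apply: open_continuous_measurable_fun; first exact: open_neq.
by move=> x /set_mem xn; apply: inv_continuous.
Qed.

Lemma meas_poly (R : realType) (p : {poly R}) :
  measurable_fun setT (fun x : R => p.[x]).
Proof. apply: continuous_measurable_fun; exact: continuous_horner. Qed.

Section Meas.
Context (R : realType) (mu : {measure set (measurableTypeR R) -> \bar R}).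
Hypothesis mom : forall k, mu.-integrable setT (fun x : R => (x ^+ k)%:E).

Lemma poly_int (p : {poly R}) :
  mu.-integrable setT (EFin \o (fun x => p.[x])).
Proof.
have h : mu.-integrable setT
    (fun x => \sum_(i < size p) ((p`_i)%:E * (x ^+ i)%:E)%E).
  apply: integrable_sum; first exact: measurableT.
  move=> i _; apply: integrableZl; first exact: measurableT.
  exact: mom.
apply: eq_integrable h; first exact: measurableT.
move=> x _ /=.
by rewrite horner_coef -sumEFin; apply: eq_bigr => i _; rewrite EFinM.
Qed.

Section W.
Variable w : R -> R.
Hypothesis wi : forall p : {poly R},
  mu.-integrable setT (EFin \o (fun x => p.[x] * w x)).
Definition W (p : {poly R}) := \int[mu]_x (p.[x] * w x).

Lemma WD p q : W (p + q) = W p + W q.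
Proof.
rewrite /W -RintegralD //; apply: eq_Rintegral => x _.
by rewrite hornerD mulrDl.
Qed.

Lemma WZ a p : W (a *: p) = a * W p.
Proof.
rewrite /W -RintegralZl //; apply: eq_Rintegral => x _.
by rewrite hornerZ mulrA.
Qed.
End W.

Lemma wi1 (p : {poly R}) :
  mu.-integrable setT (EFin \o (fun x => p.[x] * (fun _ : R => (1:R)) x)).
Proof.
apply: eq_integrable (poly_int p); first exact: measurableT.
by move=> x _ /=; rewrite mulr1.
Qed.

Lemma LmuW (f g : {poly R}) : Lmu mu f g = W (fun _ : R => (1:R)) (f * g).
Proof.
rewrite /Lmu /W /Rintegral; congr fine; apply: eq_integral => x _.
by rewrite hornerM mulr1.
Qed.

Section Ball.
Variables (c e : R).
Hypothesis e0 : 0 < e.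
Hypothesis Hb : mu (ball c e) = 0%E.

Definition psi (x : R) : R := (x - c)^-1 * \1_(~` ball c e) x.

Lemma meas_psi : measurable_fun setT psi.
Proof.
apply: measurable_funM.
  apply: measurableT_comp; first exact: meas_inv.
  by apply: measurable_funB => //; exact: measurable_cst.
by apply: measurable_indic; apply: measurableC; exact: measurable_ball.
Qed.

Lemma nball x : ~ ball c e x -> e <= `|x - c|.
Proof.
move=> nb; rewrite leNgt; apply/negP => h; apply: nb.
by rewrite -ball_normE /ball_ /= distrC.
Qed.

Lemma psi_out x : ~ ball c e x -> psi x = (x - c)^-1.
Proof.
by move=> nb; rewrite /psi indicE mem_set // mulr1.
Qed.

Lemma psi_bound x : `|psi x| <= e^-1.
Proof.
have [b|nb] := pselect (ball c e x).
  rewrite /psi indicE memNset ?mulr0 ?normr0 ?invr_ge0 ?ltW //.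
  all: try by move=> /=; apply.
rewrite psi_out // normfV lef_pV2 ?posrE ?nball //.
rewrite normr_gt0 subr_eq0; apply/eqP => xc; apply: nb; rewrite xc.
exact: ballxx.
Qed.

Lemma wpsi (p : {poly R}) :
  mu.-integrable setT (EFin \o (fun x => p.[x] * psi x)).
Proof.
apply: (le_integrable measurableT _ _ (poly_int (e^-1 *: p))).
  apply/measurable_EFinP; apply: measurable_funM; first exact: meas_poly.
  exact: meas_psi.
move=> x _ /=; rewrite lee_fin hornerZ normrM [`|e^-1 * _|]normrM mulrC.
by rewrite ler_wpM2r // (le_trans (psi_bound x)) // ger0_norm // invr_ge0 ltW.
Qed.

Lemma ae_ball (F G : R -> R) : measurable_fun setT F -> measurable_fun setT G ->
  (forall x, ~ ball c e x -> F x = G x) ->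
  (\int[mu]_x (F x)%:E = \int[mu]_x (G x)%:E)%E.
Proof.
move=> mF mG FG; apply: ae_eq_integral => //.
- exact/measurable_EFinP.
- exact/measurable_EFinP.
exists (ball c e); split => //; first exact: measurable_ball.
move=> x /= h; apply: contrapT => nb; apply: h => _; by rewrite FG.
Qed.

End Ball.
End Meas.


Theorem lemma4 (R : realType)
  (mu : {measure set (measurableTypeR R) -> \bar R})
  (c N : R) (P Q : nat -> {poly R}) (beta gamma : nat -> R)
  (sigma : {poly R}) (a b : nat -> {poly R}) (n : nat) :
  (* mu absolutely continuous w.r.t. Lebesgue measure *)
  mu `<< lebesgue_measure ->
  (* finite moments *)
  (forall k : nat, mu.-integrable setT (fun x : R => (x ^+ k)%:E)) ->
  (* the support E of mu has infinitely many points, and c is not in E *)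
  infinite_set (msupport mu) ->
  ~ msupport mu c ->
  0 < N ->
  (* P is the MOPS of mu *)
  is_MOPS (Lmu mu) P ->
  (* three-term recurrence  x P_k = P_{k+1} + beta_k P_k + gamma_k P_{k-1} *)
  (forall k : nat, 'X * P k = P k.+1 + beta k *: P k + gamma k *: Pprev P k) ->
  (* structure relation  sigma P_k' = a(.;k) P_k + b(.;k) P_{k-1} *)
  (forall k : nat, (1 <= k)%N ->
     sigma * (P k)^`() = a k * P k + b k * Pprev P k) ->
  (* Q is the MOPS of  \int f g /(x-c) dmu + N f(c) g(c) *)
  is_MOPS (LcN mu c N) Q ->
  (2 <= n)%N ->
  Lambda Q P n.-1 != 0 ->
  let L := Lambda Q P n.-1 in
  let g := gamma n.-1 in
  let bt := beta n.-1 in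
  (forall x : R,
     (Q n.-1).[x] = (- L / g) * (P n).[x]
                    + L * (L^-1 + (x - bt) / g) * (P n.-1).[x])
  /\
  (forall x : R, sigma.[x] != 0 -> (b n.-1).[x] != 0 ->
     ((Q n.-1)^`()).[x] =
       (- (L / sigma.[x]) * ((a n).[x] / g
            + (b n.-1).[x] / g * (L^-1 + (x - bt) / g))) * (P n).[x]
     + (L / sigma.[x] * ((sigma.[x] - (b n).[x]) / g
            + (b n.-1).[x] * ((a n.-1).[x] / (b n.-1).[x] + (x - bt) / g)
              * (L^-1 + (x - bt) / g))) * (P n.-1).[x]).
Proof.
move=> _ mom _ Hc _ HP rec str HQ; case: n => [|[|k]] // _ /= HL.
have [e e0 Hb] : exists2 e : R, 0 < e & mu (ball c e) = 0%E.
  apply: contrapT => H; apply: Hc => e e0.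
  rewrite lt0e measure_ge0 andbT; apply/negP => /eqP h; apply: H; by exists e.
have BLsym : forall p q, Lmu mu p q = Lmu mu q p.
  by move=> p q; rewrite !LmuW mulrC.
have BLD : forall p q r, Lmu mu (p + q) r = Lmu mu p r + Lmu mu q r.
  by move=> p q r; rewrite !LmuW mulrDl (WD _ _ _ (wi1 _ _ mom)).
have BLZ : forall t p r, Lmu mu (t *: p) r = t * Lmu mu p r.
  by move=> t p r; rewrite !LmuW -scalerAl (WZ _ _ _ (wi1 _ _ mom)).
have LcNW : forall f h, LcN mu c N f h = W _ mu (psi _ c e) (f * h) + N * (f * h).[c].
  move=> f h; rewrite /LcN /W /Rintegral hornerM mulrA; congr (fine _ + _).
  apply: (ae_ball _ _ _ _ Hb).
  - apply: measurable_funM; first by apply: measurable_funM; exact: meas_poly.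
    apply: measurableT_comp; first exact: meas_inv.
    by apply: measurable_funB => //; exact: measurable_cst.
  - by apply: measurable_funM; [exact: meas_poly|exact: meas_psi].
  by move=> x nb; rewrite psi_out // hornerM.
have wp := wpsi _ _ mom c e e0.
have BCsym : forall p q, LcN mu c N p q = LcN mu c N q p.
  by move=> p q; rewrite !LcNW mulrC.
have BCD : forall p q r, LcN mu c N (p + q) r = LcN mu c N p r + LcN mu c N q r.
  move=> p q r; rewrite !LcNW mulrDl (WD _ _ _ wp) hornerD; ring.
have BCZ : forall t p r, LcN mu c N (t *: p) r = t * LcN mu c N p r.
  move=> t p r; rewrite !LcNW -scalerAl (WZ _ _ _ wp) hornerZ; ring.

have BLN : forall p r, Lmu mu (- p) r = - Lmu mu p r.
  by move=> p r; rewrite -scaleN1r BLZ mulN1r.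
have oP : forall i j, i <> j -> Lmu mu (P i) (P j) = 0.
  by move=> i j ij; have [_ _ o _] := HP i; apply: o => h; apply: ij.
have Pp : forall j i, (j <= i)%N -> Lmu mu (P i) (Pprev P j) = 0.
  move=> j i ji; apply: (orth_low _ _ BLsym BLD BLZ _ HP j) => //.
  case: j {ji} => [|j] /=; first by rewrite size_poly0.
  by have [_ -> _ _] := HP j.
have gk : gamma k.+1 != 0.
  have [_ _ _ nzk] := HP k.
  have [_ _ _ nzk1] := HP k.+1.
  have E1 : Lmu mu ('X * P k.+1) (P k) = gamma k.+1 * Lmu mu (P k) (P k).
    rewrite rec /= !BLD !BLZ (oP k.+2 k) ?(oP k.+1 k); [ring|lia|lia].
  have E2 : Lmu mu ('X * P k.+1) (P k) = Lmu mu (P k.+1) ('X * P k).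
    by rewrite !LmuW -mulrA mulrCA.
  have E3 : Lmu mu (P k.+1) ('X * P k) = Lmu mu (P k.+1) (P k.+1).
    rewrite BLsym rec !BLD !BLZ (BLsym (P k)) (BLsym (Pprev P k)) (oP k.+1 k).
      by rewrite Pp //; ring.
    lia.
  apply/eqP => g0; move: E1; rewrite E2 E3 g0 mul0r; exact: nzk1.
have QP : forall i, (i < k)%N -> Lmu mu (Q k.+1) (P i) = 0.
  move=> i ik.
  have -> : Lmu mu (Q k.+1) (P i) = LcN mu c N (Q k.+1) (('X - c%:P) * P i).
    rewrite /LcN /Lmu hornerM hornerXsubC subrr mul0r mulr0 addr0; congr fine.
    apply: (ae_ball _ _ _ _ Hb).
    - by apply: measurable_funM; exact: meas_poly.
    - apply: measurable_funM; first by apply: measurable_funM; exact: meas_poly.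
      apply: measurableT_comp; first exact: meas_inv.
      by apply: measurable_funB => //; exact: measurable_cst.
    move=> x nb.
    have xc : x - c != 0.
      by rewrite subr_eq0; apply/eqP => h; apply: nb; rewrite h; exact: ballxx.
    rewrite hornerM hornerXsubC; field; exact: xc.
  apply: (orth_low _ _ BCsym BCD BCZ _ HQ k.+1) => //.
  have [mi si _ _] := HP i.
  rewrite size_Mmonic ?polyXsubC_eq0 // size_XsubC si; lia.
have Qe : Q k.+1 = P k.+1 + Lambda Q P k.+1 *: P k.
  set Lm := Lambda Q P k.+1.
  suff h : Q k.+1 - P k.+1 - Lm *: P k = 0.
    by apply/eqP; rewrite -subr_eq0 opprD addrA h.
  apply: (zero_of_orth _ _ BLsym BLD BLZ _ HP k).
    apply/leq_sizeP => j kj.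
    have [mQ sQ _ _] := HQ k.+1; have [mP sP _ _] := HP k.+1.
    have [mP0 sP0 _ _] := HP k.
    case: (ltngtP j k.+1) => [jk|jk|->].
    - have -> : j = k by lia.
      by rewrite coefB coefZ /Lm /Lambda /= (coefPk _ _ _ HP k) mulr1 subrr.
    - rewrite !coefB coefZ !nth_default ?sQ ?sP ?sP0 //; first (by rewrite mulr0 !subr0); lia.
    - rewrite !coefB coefZ (coefPk _ _ _ HQ k.+1) (coefPk _ _ _ HP k.+1) subrr.
      by rewrite nth_default ?sP0 // mulr0 subr0.
  move=> i ik; rewrite !BLD !BLN BLZ QP // (oP k.+1 i) ?(oP k i); [ring|lia|lia].
split.
  move=> x.
  have := congr1 (fun p => p.[x]) (rec k.+1).
  rewrite /= hornerM hornerX !hornerD !hornerZ => h5.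
  have e5 : (P k).[x] = (x * (P k.+1).[x] - (P k.+2).[x] - beta k.+1 * (P k.+1).[x]) / gamma k.+1.
    by rewrite h5; field; exact: gk.
  rewrite Qe hornerD hornerZ e5; field; rewrite ?HL ?gk //.
move=> x sx bx.
have := congr1 (fun p => p.[x]) (rec k.+1).
rewrite /= hornerM hornerX !hornerD !hornerZ => h5.
have := congr1 (fun p => (p^`()).[x]) (rec k.+1).
rewrite /= derivM derivX mul1r !derivD !derivZ !hornerD hornerM hornerX !hornerZ => h2.
have := congr1 (fun p => p.[x]) (str k.+1 isT).
rewrite /= !hornerD !hornerM => h3.
have := congr1 (fun p => p.[x]) (str k.+2 isT).
rewrite /= !hornerD !hornerM => h4.
have e5 : (P k).[x] = (x * (P k.+1).[x] - (P k.+2).[x] - beta k.+1 * (P k.+1).[x]) / gamma k.+1.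
  by rewrite h5; field; exact: gk.
have e3 : ((P k.+1)^`()).[x] = ((a k.+1).[x] * (P k.+1).[x] + (b k.+1).[x] * (P k).[x]) / sigma.[x].
  by rewrite -h3; field; exact: sx.
have e4 : ((P k.+2)^`()).[x] = ((a k.+2).[x] * (P k.+2).[x] + (b k.+2).[x] * (P k.+1).[x]) / sigma.[x].
  by rewrite -h4; field; exact: sx.
have e2 : ((P k)^`()).[x] = ((P k.+1).[x] + x * ((P k.+1)^`()).[x] - ((P k.+2)^`()).[x] - beta k.+1 * ((P k.+1)^`()).[x]) / gamma k.+1.
  by rewrite h2; field; exact: gk.
rewrite Qe derivD derivZ hornerD hornerZ e2 e3 e4 e5.
field; rewrite ?HL ?gk ?sx ?bx //.
Qed.
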